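(* Let $p$ be a prime, $m$ a positive integer, $q=p^m$, $n=q^2+1$. Let $\lambda\in\mathbb{F}_{q^2}^*$ have multiplicative order $r$, where $r\mid (q+1)$ and $\nu_2(r)=\nu_2(q+1)$. Let $\delta\in\mathbb{F}_{q^4}$ be a primitive $rn$-th root of unity with $\delta^n=\lambda$. For a positive integer $s$ with $s\mid (q^2-1)$, let $U_{s(q^2+1)}$ denote the set of all $s(q^2+1)$-th roots of unity in $\mathbb{F}_{q^4}^*$. Define $f(x)=x^{q+1}$ for $x\in U_{r(q^2+1)}$, and for $y_0$ let $f^{-1}(y_0)=\{x\in U_{r(q^2+1)}: f(x)=y_0\}$. Let $T=\{\delta^{-i}: 0\le i\le q^2\}$ and $\lambda^jT=\{\lambda^j\delta^{-i}: 0\le i\le q^2\}$ for $0\le j\le r-1$. Then $f$ maps $U_{r(q^2+1)}$ onto $U_{q^2+1}$. Moreover, for $y_0\in U_{q^2+1}$, if $f(x_0)=y_0$ for some $x_0\in U_{r(q^2+1)}$, then $f^{-1}(y_0)=\{\lambda^jx_0: 0\le j\le r-1\}$ and $|f^{-1}(y_0)\cap\lambda^jT|=1$ for every $0\le j\le r-1$.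
   Context: $\nu_2(\cdot)$ denotes the $2$-adic valuation of a positive integer. *)

(* Defs.v *)
From HB Require Import structures.
From mathcomp Require Import all_boot all_order all_algebra all_field.
Set Implicit Arguments. Unset Strict Implicit. Unset Printing Implicit Defensive.
Import GRing.Theory.
Local Open Scope ring_scope.

Definition Uroots (F : finFieldType) (k : nat) : {set F} :=
  [set x : F | x ^+ k == 1].

Definition Tset (F : finFieldType) (delta : F) (N : nat) : {set F} :=
  [set delta ^- (val i) | i : 'I_N].

Definition scaleset (F : finFieldType) (c : F) (A : {set F}) : {set F} :=
  [set c * t | t in A].

Definition fpreim (F : finFieldType) (D : {set F}) (e : nat) (y0 : F) : {set F} :=
  [set x in D | x ^+ e == y0].

(* Main.v *)
Require Import Defs.
From HB Require Import structures.
From mathcomp Require Import all_boot all_order all_algebra all_field.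
From mathcomp Require Import zify ring.
Import GRing.Theory.
Local Open Scope ring_scope.

Theorem lemma3p1 (p m q n r : nat) (F : finFieldType) (lambda delta : F) :
  prime p -> (0 < m)%N -> q = (p ^ m)%N -> n = (q ^ 2 + 1)%N ->
  #|F| = (q ^ 4)%N ->
  (* lambda in F_{q^2}^* of multiplicative order r *)
  lambda ^+ (q ^ 2) = lambda -> lambda != 0 -> r.-primitive_root lambda ->
  (r %| q + 1)%N -> logn 2 r = logn 2 (q + 1) ->
  (* delta a primitive (r n)-th root of unity with delta^n = lambda *)
  (r * n).-primitive_root delta -> delta ^+ n = lambda ->
  (forall x, x \in Uroots F (r * n) -> x ^+ (q + 1) \in Uroots F n) /\
  (forall y, y \in Uroots F n -> exists2 x, x \in Uroots F (r * n) & x ^+ (q + 1) = y) /\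
  (forall y0 x0, y0 \in Uroots F n -> x0 \in Uroots F (r * n) -> x0 ^+ (q + 1) = y0 ->
     fpreim (Uroots F (r * n)) (q + 1) y0 = [set lambda ^+ (val j) * x0 | j : 'I_r] /\
     (forall j, (j < r)%N ->
        #|fpreim (Uroots F (r * n)) (q + 1) y0 :&: scaleset (lambda ^+ j) (Tset delta n)| = 1%N)).
Proof.
move=> pp m0 hq hn _ _ l0 lprim hrq hlog dprim hdn.
have q0 : (0 < q)%N by rewrite hq expn_gt0 prime_gt0.
have r0 : (0 < r)%N := prim_order_gt0 lprim.
have n0 : (0 < n)%N by rewrite hn addn1.
have rn0 : (0 < r * n)%N by rewrite muln_gt0 r0 n0.
have [s hs] := dvdnP hrq.
have s0 : (0 < s)%N by move: hs; case: s => //= ; lia.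
have sodd : ~~ (2 %| s)%N.
  apply/negP => h2.
  have : (0 < logn 2 s)%N by rewrite logn_gt0 mem_primes /= s0 h2.
  move: hlog; rewrite hs lognM //; lia.
have cop : coprime s n.
  rewrite /coprime; set g := gcdn s n.
  have gs : (g %| s)%N := dvdn_gcdl s n.
  have gn : (g %| n)%N := dvdn_gcdr s n.
  have gq : (g %| q + 1)%N by rewrite hs dvdn_mulr.
  have g2 : (g %| 2)%N.
    have e1 : ((q + 1) * (q + 1) = n + 2 * q)%N by rewrite hn; ring.
    have h1 : (g %| n + 2 * q)%N by rewrite -e1 dvdn_mulr.
    rewrite (dvdn_addr _ gn) in h1.
    have e2 : (2 * q + 2 = 2 * (q + 1))%N by ring.
    have h2 : (g %| 2 * q + 2)%N by rewrite e2 dvdn_mull.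
    by rewrite (dvdn_addr _ h1) in h2.
  have g0 : (0 < g)%N by rewrite gcdn_gt0 s0.
  have gle := dvdn_leq (isT : (0 < 2)%N) g2.
  apply/eqP; have : g <> 2%N by move=> e; move: sodd; rewrite -e gs.
  lia.
have gcdr : gcdn (q + 1) (r * n) = r.
  by rewrite hs [(r * n)%N]mulnC -muln_gcdl (eqP cop) mul1n.
have lr : lambda ^+ r = 1 := prim_expr_order lprim.
have drn : delta ^+ (r * n) = 1 := prim_expr_order dprim.
have d0 : delta != 0.
  by apply/negP => /eqP d0; move: drn; rewrite d0 expr0n; rewrite gtn_eqF // => /eqP; rewrite eq_sym oner_eq0.
have ker : forall z : F, z ^+ (r * n) = 1 -> z ^+ (q + 1) = 1 -> exists k : 'I_r, z = lambda ^+ k.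
  move=> z z1 z2.
  have [d dp dd] := prim_order_exists rn0 z1.
  have dq : (d %| q + 1)%N by rewrite (prim_order_dvd dp) z2.
  have dr : (d %| r)%N by rewrite -gcdr dvdn_gcd dq dd.
  have zr : z ^+ r = 1 := expr_dvd (prim_expr_order dp) dr.
  have [k ->] := prim_rootP lprim zr.
  by exists k.
have lq : lambda ^+ (q + 1) = 1 := expr_dvd lr hrq.
have Urn : forall x : F, x \in Uroots F (r * n) -> x != 0.
  move=> x; rewrite /Uroots inE => /eqP hx; apply/negP => /eqP x0.
  by move: hx; rewrite x0 expr0n; rewrite gtn_eqF // => /eqP; rewrite eq_sym oner_eq0.
have ljU : forall j, (lambda ^+ j) ^+ (r * n) = 1.
  by move=> j; rewrite -exprM (expr_dvd lr) // dvdn_mull // dvdn_mulr.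
have ljq : forall j, (lambda ^+ j) ^+ (q + 1) = 1.
  by move=> j; rewrite -exprM (expr_dvd lq) // dvdn_mull.
have claim3 : forall y0 x0, x0 \in Uroots F (r * n) -> x0 ^+ (q + 1) = y0 ->
     fpreim (Uroots F (r * n)) (q + 1) y0 = [set lambda ^+ (val j) * x0 | j : 'I_r].
  move=> y0 x0 hx0 hy0.
  have x00 := Urn _ hx0.
  move: hx0; rewrite /Uroots inE => /eqP hx0.
  apply/setP => x; rewrite /fpreim !inE; apply/idP/idP.
    case/andP => /eqP hx /eqP hxq.
    have [k hk] : exists k : 'I_r, x / x0 = lambda ^+ k.
      apply: ker; rewrite expr_div_n ?hx ?hx0 ?divr1 //.
      by rewrite hxq -hy0 divff // expf_neq0.
    apply/imsetP; exists k => //.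
    by rewrite -hk divfK.
  case/imsetP => j _ ->.
  by rewrite !exprMn ljU ljq hx0 hy0 !mul1r !eqxx.
split.
  move=> x; rewrite /Uroots !inE => /eqP hx.
  by rewrite -exprM (expr_dvd hx) // dvdn_mul.
split.
  move=> y; rewrite /Uroots !inE => /eqP hy.
  have yrn : y ^+ (r * n) = 1 by rewrite mulnC exprM hy expr1n.
  have [[i ilt] /= hi] := prim_rootP dprim yrn.
  have : (r * n %| i * n)%N by rewrite (prim_order_dvd dprim) exprM -hi hy.
  rewrite dvdn_pmul2r // => /dvdnP [t ht].
  have [[km kn] /= hk] : exists kk : nat * nat, (kk.1 * s = kk.2 * n + 1)%N.
    case: (egcdnP n s0) => km kn hk _.
    exists (km, kn); by rewrite /= hk (eqP cop).
  exists (delta ^+ (t * km)).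
    by rewrite inE -exprM mulnC exprM drn expr1n.
  rewrite hi ht -exprM; apply/eqP; rewrite (eq_prim_root_expr dprim).
  have e : (t * km * (q + 1) = t * kn * (r * n) + t * r)%N.
    rewrite hs; have -> : (t * km * (s * r) = t * r * (km * s))%N by ring.
    rewrite hk; ring.
  by rewrite e modnMDl.
move=> y0 x0 hy0 hx0 hxy.
have c3 := claim3 y0 x0 hx0 hxy.
split => // j jr.
have x00 := Urn _ hx0.
move: (hx0); rewrite /Uroots inE => /eqP hx0'.
have [[b blt] /= hb] := prim_rootP dprim hx0'.
pose i := ((n - b %% n) %% n)%N.
have ilt : (i < n)%N by rewrite ltn_pmod.
pose w := lambda ^+ j * delta ^- i.
have wU : w \in Uroots F (r * n).
  by rewrite inE /w exprMn ljU exprVn -exprM mulnC exprM drn expr1n invr1 mulr1.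
have nbi : (n %| b + i)%N.
  rewrite /dvdn /i modnDmr -modnDml subnKC ?modnn //.
  by apply: ltnW; rewrite ltn_pmod.
have wq : w ^+ (q + 1) = y0.
  have e : delta ^+ (b * (q + 1)) * delta ^+ (i * (q + 1)) = 1.
    rewrite -exprD -mulnDl; apply/eqP; rewrite -(prim_order_dvd dprim).
    by rewrite hs mulnC dvdn_mul // dvdn_mull.
  have := mulfK (expf_neq0 (i * (q + 1)) d0) (delta ^+ (b * (q + 1))).
  rewrite e mul1r => e2.
  by rewrite /w exprMn ljq mul1r -hxy hb -!exprM -e2 exprVn -exprM.
have wP : w \in fpreim (Uroots F (r * n)) (q + 1) y0 by rewrite inE wU wq eqxx.
suff -> : fpreim (Uroots F (r * n)) (q + 1) y0 :&: scaleset (lambda ^+ j) (Tset delta n) = [set w].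
  by rewrite cards1.
apply/setP => z; rewrite !inE; apply/idP/idP.
  case/andP => zP /imsetP [t /imsetP [[i' i'lt] _ ht] hz]; subst z t; simpl in *.
  move: zP => /andP [/eqP zU /eqP zq].
  have [k hk] : exists k : 'I_r, (lambda ^+ j * delta ^- i') / w = lambda ^+ k.
    have w0 := Urn _ wU.
    apply: ker; rewrite expr_div_n ?zU ?zq.
      by move: (wU); rewrite inE => /eqP ->; rewrite divr1.
    by rewrite wq divff // -hxy expf_neq0.
  have l0' : lambda ^+ j != 0 by rewrite expf_neq0.
  have di0 : forall a, delta ^+ a != 0 by move=> a; rewrite expf_neq0.
  have e1 : delta ^+ i = lambda ^+ k * delta ^+ i'.
    rewrite -hk /w; move: (di0 i) (di0 i') l0'.
    move=> h1 h2 h3.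
    rewrite invf_div mulrA -(mulrA (lambda ^+ j)) (mulrC _ (delta ^+ i)) mulrA.
    by rewrite mulrAC divfK // (mulrC (lambda ^+ j)) mulfK.
  move: e1; rewrite -hdn -exprM -exprD => /eqP; rewrite (eq_prim_root_expr dprim).
  have kr : (k < r)%N := ltn_ord k.
  have h1 : (i < r * n)%N by apply: leq_trans ilt _; rewrite leq_pmull.
  have h3 : (n * k.+1 <= n * r)%N by rewrite leq_mul2l kr orbT.
  have h2 : (n * k + i' < r * n)%N.
    move: h3; rewrite mulnS (mulnC r n) => h3; clear -h3 i'lt; lia.
  rewrite !modn_small // => /eqP e.
  have k0 : (k : nat) = 0%N.
    case: (posnP k) => // kp.
    have : (n <= n * k)%N by rewrite leq_pmulr.
    move=> h; clearbody i; clear -h e ilt; lia.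
  move: hk; rewrite k0 expr0 => hk.
  by apply/eqP; rewrite hdn -(divfK (Urn _ wU) (lambda ^+ j * delta ^- i')) hk mul1r.
move=> /eqP ->; move: (wU); rewrite inE => -> /=; rewrite wq eqxx /=.
apply/imsetP; exists (delta ^- i) => //.
by apply/imsetP; exists (Ordinal ilt).
Qed.
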